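(* Let $\alpha,\beta,\gamma,\delta\in\mathbb{C}$ be parameters for which all gamma functions and hypergeometric functions below are well-defined, and for $z\ne0$ let $$f(\alpha,\beta,\gamma,\delta;z)=\sum_{\nu=0}^{\infty}\frac{z^{-\nu}\Gamma(\alpha+\gamma+\nu)}{\nu!\,\Gamma(\beta+\nu)}\,E\left(\begin{matrix}\alpha+1,&\beta+\nu\\ \delta,&\beta+1+\nu\end{matrix};z\right).$$ Then $$f(\alpha,\beta,\gamma,\delta;z)=\frac{\Gamma(\alpha+1)\Gamma(\alpha+\gamma)}{\Gamma(\beta+1)\Gamma(\delta)}+O(z^{-1})\quad\text{as }|z|\to\infty.$$
   Context: For complex parameters $a_1,\dots,a_p$, $b_1,\dots,b_q$ with $p\le q$ and $z\in\mathbb{C}\setminus\{0\}$, the MacRobert $E$-function is $$E\left(\begin{matrix}a_1,\dots,a_p\\ b_1,\dots,b_q\end{matrix};z\right)=\frac{\prod_{j=1}^p\Gamma(a_j)}{\prod_{j=1}^q\Gamma(b_j)}\,{}_pF_q\left(\begin{matrix}a_1,\dots,a_p\\ b_1,\dots,b_q\end{matrix};-\frac1z\right),$$ where ${}_pF_q$ is the generalized hypergeometric function. *)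

(* Defs.v *)
From Stdlib Require Import Reals List Factorial.
From Coquelicot Require Import Coquelicot.
Import ListNotations.

Open Scope C_scope.

Definition Cexp (z : C) : C :=
  (exp (fst z) * cos (snd z), exp (fst z) * sin (snd z))%R.

Definition Cnpow (n : nat) (z : C) : C := Cexp (z * RtoC (ln (INR n))).

(* Sum of a complex series (componentwise real Series; equals the sum
   whenever the series converges). *)
Definition CSeries (a : nat -> C) : C :=
  (Series (fun n => fst (a n)), Series (fun n => snd (a n))).

(* Limit of a complex sequence (componentwise; equals the limit when the
   sequence converges). *)
Definition CLim_seq (u : nat -> C) : C :=
  (real (Lim_seq (fun n => fst (u n))), real (Lim_seq (fun n => snd (u n)))).

Fixpoint poch (a : C) (k : nat) : C :=
  match k with
  | O => 1
  | S k' => poch a k' * (a + RtoC (INR k'))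
  end.

(* Gauss/Euler limit formula for the complex Gamma function:
   Gamma(z) = lim_{n->oo} n! n^z / (z (z+1) ... (z+n)),
   valid (convergent) for all z not in {0,-1,-2,...}. *)
Definition Gamma_seq (z : C) (n : nat) : C :=
  RtoC (INR (Factorial.fact n)) * Cnpow n z / poch z (S n).

Definition CGamma (z : C) : C := CLim_seq (Gamma_seq z).

Definition not_nonpos_int (z : C) : Prop := forall k : nat, z <> RtoC (- INR k).

Definition Cprod (l : list C) : C := fold_right Cmult 1 l.

Definition hypergeo (as_ bs : list C) (x : C) : C :=
  CSeries (fun k =>
    Cprod (map (fun a => poch a k) as_) / Cprod (map (fun b => poch b k) bs)
    * x ^ k / RtoC (INR (Factorial.fact k))).

Definition MacRobertE (as_ bs : list C) (z : C) : C :=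
  Cprod (map CGamma as_) / Cprod (map CGamma bs) * hypergeo as_ bs (- / z).

Definition f_term (al be ga de z : C) (nu : nat) : C :=
  (/ z) ^ nu * CGamma (al + ga + RtoC (INR nu))
  / (RtoC (INR (Factorial.fact nu)) * CGamma (be + RtoC (INR nu)))
  * MacRobertE [al + 1; be + RtoC (INR nu)] [de; be + 1 + RtoC (INR nu)] z.

Definition f_fun (al be ga de z : C) : C := CSeries (f_term al be ga de z).

(* Main.v *)
Require Import Defs.
From Stdlib Require Import Reals Lra Lia Psatz ZArith List.
From Coquelicot Require Import Coquelicot.
Import ListNotations.
Open Scope R_scope.


Lemma Rabs_le_inv x a : Rabs x <= a -> -a <= x <= a.
Proof. unfold Rabs; destruct Rcase_abs; lra. Qed.
Lemma Rabs_le x a : -a <= x <= a -> Rabs x <= a.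
Proof. unfold Rabs; destruct Rcase_abs; lra. Qed.

Lemma sin_approx1 a : sin_approx a 1 = a - a^3/6.
Proof. unfold sin_approx, sin_term; simpl. field. Qed.
Lemma sin_approx2 a : sin_approx a 2 = a - a^3/6 + a^5/120.
Proof. unfold sin_approx, sin_term; simpl. field. Qed.
Lemma cos_approx1 a : cos_approx a 1 = 1 - a^2/2.
Proof. unfold cos_approx, cos_term; simpl. field. Qed.

Lemma cos_near a : Rabs a <= 1/2 -> Rabs (cos a - 1) <= a^2.
Proof.
  intros Ha. destruct (pre_cos_bound a 0) as [H1 H2].
  - apply Rabs_le_inv in Ha; lra.
  - apply Rabs_le_inv in Ha; lra.
  - simpl in H1. rewrite cos_approx1 in H1. pose proof (COS_bound a).
    apply Rabs_le. nra.
Qed.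

Lemma sin_near_pos a : 0 <= a <= 1/2 -> Rabs (sin a - a) <= a^2.
Proof.
  intros Ha. destruct (pre_sin_bound a 0) as [H1 H2]; try lra.
  simpl in H1, H2. rewrite sin_approx1 in H1. rewrite sin_approx2 in H2.
  assert (0 <= a^3 <= a^2) by (split; [apply pow_le; lra| simpl; nra]).
  assert (0 <= a^5 <= a^2) by (split; [apply pow_le; lra| simpl; nra]).
  apply Rabs_le. split; lra.
Qed.

Lemma sin_near a : Rabs a <= 1/2 -> Rabs (sin a - a) <= a^2.
Proof.
  intros Ha. destruct (Rle_dec 0 a).
  - apply sin_near_pos. apply Rabs_le_inv in Ha; lra.
  - replace (sin a - a) with (-(sin (-a) - (-a))) by (rewrite sin_neg; ring).
    rewrite Rabs_Ropp. replace (a^2) with ((-a)^2) by ring.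
    apply sin_near_pos. apply Rabs_le_inv in Ha; lra.
Qed.

Lemma sin_abs_le a : Rabs a <= 1/2 -> Rabs (sin a) <= 2 * Rabs a.
Proof.
  intros Ha. pose proof (sin_near a Ha).
  assert (Rabs (sin a) <= Rabs (sin a - a) + Rabs a).
  { replace (sin a) with ((sin a - a) + a) at 1 by ring. apply Rabs_triang. }
  assert (a^2 <= Rabs a). { assert (a^2 = Rabs a * Rabs a) by (unfold Rabs; destruct Rcase_abs; ring).
    pose proof (Rabs_pos a). nra. }
  lra.
Qed.

Lemma exp_near a : Rabs a <= 1/2 -> 0 <= exp a - 1 - a <= 2 * a^2.
Proof.
  intros Ha. apply Rabs_le_inv in Ha. split.
  - pose proof (exp_ineq1_le a); lra.
  - pose proof (exp_ineq1_le (-a)). pose proof (exp_pos a).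
    assert (exp a * exp (-a) = 1) by (rewrite <- exp_plus; replace (a + - a) with 0 by ring; apply exp_0).
    assert (exp a * (1 - a) <= 1) by nra.
    nra.
Qed.

Lemma Cmod2 (u : C) : Cmod u ^ 2 = fst u ^ 2 + snd u ^ 2.
Proof. unfold Cmod. rewrite pow2_sqrt; auto. nra. Qed.

Lemma Cmod_fst (u : C) : Rabs (fst u) <= Cmod u.
Proof. apply re_le_Cmod. Qed.
Lemma Cmod_snd (u : C) : Rabs (snd u) <= Cmod u.
Proof.
  unfold Cmod. rewrite <- (sqrt_pow2 (Rabs (snd u))) by apply Rabs_pos.
  apply sqrt_le_1_alt.
  assert (snd u ^2 = Rabs (snd u) ^2) by (unfold Rabs; destruct Rcase_abs; ring). nra.
Qed.

Lemma Cmod_le_sum (u : C) : Cmod u <= Rabs (fst u) + Rabs (snd u).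
Proof.
  unfold Cmod. rewrite <- (sqrt_pow2 (Rabs (fst u) + Rabs (snd u))).
  2:{ pose proof (Rabs_pos (fst u)); pose proof (Rabs_pos (snd u)); lra. }
  apply sqrt_le_1_alt.
  assert (fst u ^2 = Rabs (fst u) * Rabs (fst u)) by (unfold Rabs; destruct Rcase_abs; ring).
  assert (snd u ^2 = Rabs (snd u) * Rabs (snd u)) by (unfold Rabs; destruct Rcase_abs; ring).
  pose proof (Rabs_pos (fst u)); pose proof (Rabs_pos (snd u)). nra.
Qed.

Lemma Cmod_inv_all (x : C) : Cmod (/ x) = / Cmod x.
Proof.
  destruct (Ceq_dec x 0) as [->|H].
  - rewrite Cmod_0, Rinv_0. unfold Cinv; simpl. idtac.
    unfold Rdiv. rewrite !Rmult_0_l, Ropp_0, Rmult_0_l. apply Cmod_0.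
  - apply Cmod_inv; auto.
Qed.

Lemma Cexp_add a b : Cexp (a + b) = (Cexp a * Cexp b)%C.
Proof.
  unfold Cexp; destruct a as [a1 a2], b as [b1 b2]; simpl.
  rewrite exp_plus, cos_plus, sin_plus. apply injective_projections; simpl; ring.
Qed.

Lemma Cexp_bound (u : C) : Cmod u <= 1/2 -> Cmod (Cexp u - 1 - u) <= 10 * Cmod u ^ 2.
Proof.
  intros Hu. pose proof (Cmod_fst u) as Ha. pose proof (Cmod_snd u) as Hb.
  pose proof (Cmod2 u) as H2. destruct u as [a b]; simpl in *.
  eapply Rle_trans; [apply Cmod_le_sum|]. unfold Cexp; simpl.
  assert (Ha2 : Rabs a <= 1/2) by lra. assert (Hb2 : Rabs b <= 1/2) by lra.
  pose proof (exp_near a Ha2) as E. pose proof (cos_near b Hb2) as Co.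
  pose proof (sin_near b Hb2) as Si. pose proof (sin_abs_le b Hb2) as Sa.
  pose proof (exp_pos a) as Ep.
  assert (Hsa : a^2 = Rabs a * Rabs a) by (unfold Rabs; destruct Rcase_abs; ring).
  assert (Hsb : b^2 = Rabs b * Rabs b) by (unfold Rabs; destruct Rcase_abs; ring).
  pose proof (Rabs_pos a); pose proof (Rabs_pos b).
  assert (E2 : Rabs (exp a - 1) <= 2 * Rabs a).
  { apply Rabs_le. pose proof Ha2 as Ha3. apply Rabs_le_inv in Ha2. destruct E.
    unfold Rabs in *; destruct Rcase_abs; split; nra. }
  assert (R1 : Rabs (exp a * cos b - 1 - a) <= 2 * a^2 + 2 * b^2).
  { replace (exp a * cos b - 1 - a) with ((exp a - 1 - a) + exp a * (cos b - 1)) by ring.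
    eapply Rle_trans; [apply Rabs_triang|]. rewrite Rabs_mult.
    rewrite (Rabs_right (exp a - 1 - a)) by lra. rewrite (Rabs_right (exp a)) by lra.
    assert (exp a <= 2) by (apply Rabs_le_inv in Ha2; nra). 
    pose proof (Rabs_pos (cos b - 1)). nra. }
  assert (R2 : Rabs (exp a * sin b - (0 + b)) <= 4 * Rabs a * Rabs b + b^2).
  { replace (exp a * sin b - (0 + b)) with ((exp a - 1) * sin b + (sin b - b)) by ring.
    eapply Rle_trans; [apply Rabs_triang|]. rewrite Rabs_mult.
    pose proof (Rabs_pos (exp a - 1)). pose proof (Rabs_pos (sin b)).
    assert (Rabs (exp a - 1) * Rabs (sin b) <= (2 * Rabs a) * (2 * Rabs b))
      by (apply Rmult_le_compat; auto). lra. }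
  replace (exp a * cos b - 1 - (a + 0)) with (exp a * cos b - 1 - a) by ring.
  assert (2 * Rabs a * Rabs b <= a^2 + b^2) by (pose proof (pow2_ge_0 (Rabs a - Rabs b)); nra).
  rewrite H2.
  replace (exp a * cos b + - (1) + - a) with (exp a*cos b - 1 - a) by ring.
  replace (exp a * sin b + - 0 + - b) with (exp a * sin b - (0 + b)) by ring.
  replace (10 * (a*(a*1)+b*(b*1))) with (10*(a^2+b^2)) by ring.
  pose proof (pow2_ge_0 a); pose proof (pow2_ge_0 b). lra.
Qed.

Definition Clim (u : nat -> C) (L : C) : Prop :=
  is_lim_seq (fun n => fst (u n)) (fst L) /\ is_lim_seq (fun n => snd (u n)) (snd L).

Lemma Clim_CLim u L : Clim u L -> CLim_seq u = L.
Proof.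
  intros [H1 H2]. unfold CLim_seq. rewrite (is_lim_seq_unique _ _ H1), (is_lim_seq_unique _ _ H2).
  simpl. destruct L; reflexivity.
Qed.

Fixpoint psum (s : nat -> R) (n : nat) : R :=
  match n with O => 0 | S n => psum s n + s n end.

Lemma psum_sum s n : psum s (S n) = sum_f_R0 s n.
Proof. induction n; simpl in *; [ring|]. rewrite <- IHn. simpl. ring. Qed.

Lemma Series_zero : Series (fun _ : nat => 0) = 0.
Proof.
  apply is_series_unique. apply is_series_Reals. intros e He. exists O. intros.
  rewrite sum_cte. unfold R_dist. rewrite Rmult_0_l, Rminus_0_r, Rabs_R0. auto.
Qed.

Lemma Series_nonneg s : (forall k, 0 <= s k) -> ex_series s -> 0 <= Series s.
Proof.
  intros Hp Hs. rewrite <- Series_zero. apply Series_le; auto. intros; split; [lra|auto].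
Qed.

Lemma psum_le_Series s n : (forall k, 0 <= s k) -> ex_series s -> psum s n <= Series s.
Proof.
  intros Hp Hs. destruct n as [|n].
  - simpl. apply Series_nonneg; auto.
  - rewrite psum_sum. rewrite (Series_incr_n s (S n)); [|lia|auto]. simpl pred.
    assert (0 <= Series (fun k => s (S n + k)%nat)).
    { apply Series_nonneg; [intros; auto|]. apply (ex_series_incr_n s (S n)). auto. }
    lra.
Qed.

Lemma sum_n_tele (d : nat -> R) (p : nat -> R) :
  (forall n, d n = p (S n) - p n) -> forall n, p (S n) = p O + sum_n d n.
Proof.
  intros H n. induction n.
  - rewrite sum_O, H. ring.
  - rewrite sum_Sn. change plus with Rplus.
    replace (p O + (sum_n d n + d (S n))) with ((p O + sum_n d n) + d (S n)) by ring.
    rewrite <- IHn. rewrite (H (S n)). ring.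
Qed.

Lemma lim_tele (d : nat -> R) (p : nat -> R) :
  (forall n, d n = p (S n) - p n) -> ex_series d -> is_lim_seq p (p O + Series d).
Proof.
  intros H Hs. apply is_lim_seq_incr_1.
  apply (is_lim_seq_ext (fun n => p O + sum_n d n)).
  { intros n. rewrite (sum_n_tele d p H n). reflexivity. }
  apply (is_lim_seq_plus' (fun _ => p O) (sum_n d)).
  - apply is_lim_seq_const.
  - apply (Series_correct d Hs).
Qed.

Lemma prod_conv (P r : nat -> C) :
  (forall n, P (S n) = (P n * r n)%C) -> ex_series (fun n => Cmod (r n - 1)) ->
  exists L M, Clim P L /\ forall n, Cmod (P n) <= M.
Proof.
  intros HP Hs. set (s := fun n => Cmod (r n - 1)).
  set (M := Cmod (P O) * exp (Series s)).
  assert (Hpos : forall k, 0 <= s k) by (intros; apply Cmod_ge_0).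
  assert (HM : forall n, Cmod (P n) <= Cmod (P O) * exp (psum s n)).
  { induction n.
    - simpl. rewrite exp_0. lra.
    - rewrite HP, Cmod_mult. simpl psum. rewrite exp_plus.
      assert (Cmod (r n) <= exp (s n)).
      { replace (r n) with ((r n - 1) + 1)%C by ring.
        eapply Rle_trans; [apply Cmod_triangle|]. rewrite Cmod_1.
        pose proof (exp_ineq1_le (s n)). unfold s in *. lra. }
      pose proof (Cmod_ge_0 (P n)). pose proof (Cmod_ge_0 (r n)).
      pose proof (Cmod_ge_0 (P O)). pose proof (exp_pos (psum s n)).
      replace (Cmod (P 0%nat) * (exp (psum s n) * exp (s n))) with
        ((Cmod (P 0%nat) * exp (psum s n)) * exp (s n)) by ring.
      apply Rmult_le_compat; auto. }
  assert (HB : forall n, Cmod (P n) <= M).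
  { intros n. eapply Rle_trans; [apply HM|]. unfold M.
    apply Rmult_le_compat_l; [apply Cmod_ge_0|].
    pose proof (psum_le_Series s n Hpos Hs) as Hle.
    destruct (Rle_lt_or_eq_dec _ _ Hle) as [Hl|He]; [left; apply exp_increasing; auto|right; rewrite He; auto]. }
  assert (Hd : forall n, Cmod (P (S n) - P n) <= M * s n).
  { intros n. rewrite HP. replace (P n * r n - P n)%C with (P n * (r n - 1))%C by ring.
    rewrite Cmod_mult. apply Rmult_le_compat_r; auto. }
  assert (HsM : ex_series (fun n => M * s n)) by (apply (ex_series_scal_l (V:=R_NormedModule)); auto).
  assert (E1 : ex_series (fun n => fst (P (S n)) - fst (P n))).
  { apply (ex_series_le (V:=R_CompleteNormedModule) _ (fun n => M * s n)); auto. intros n.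
    unfold norm; simpl; unfold abs; simpl. eapply Rle_trans; [|apply (Hd n)].
    apply (Cmod_fst (P (S n) - P n)). }
  assert (E2 : ex_series (fun n => snd (P (S n)) - snd (P n))).
  { apply (ex_series_le (V:=R_CompleteNormedModule) _ (fun n => M * s n)); auto. intros n.
    unfold norm; simpl; unfold abs; simpl. eapply Rle_trans; [|apply (Hd n)].
    apply (Cmod_snd (P (S n) - P n)). }
  exists (fst (P O) + Series (fun n => fst (P (S n)) - fst (P n)),
          snd (P O) + Series (fun n => snd (P (S n)) - snd (P n))), M.
  split; [split|auto]; simpl.
  - apply (lim_tele _ (fun n => fst (P n))); auto.
  - apply (lim_tele _ (fun n => snd (P n))); auto.
Qed.

Lemma nnpi_ne w : not_nonpos_int w -> forall k, (w + RtoC (INR k) <> 0)%C.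
Proof.
  intros Hw k H. apply (Hw k). pose proof (f_equal fst H) as H1. pose proof (f_equal snd H) as H2.
  simpl in H1, H2. destruct w as [a b]; simpl in *. apply injective_projections; simpl; lra.
Qed.

Lemma nnpi_shift w k : not_nonpos_int w -> not_nonpos_int (w + RtoC (INR k)).
Proof.
  intros Hw j H. apply (Hw (j + k)%nat). pose proof (f_equal fst H) as H1. pose proof (f_equal snd H) as H2.
  rewrite plus_INR. destruct w as [a b]; simpl in *. apply injective_projections; simpl; lra.
Qed.

Lemma nnpi_1 w : not_nonpos_int w -> not_nonpos_int (w + 1).
Proof. intros H. pose proof (nnpi_shift w 1 H). simpl in H0. exact H0. Qed.

Lemma poch_nz w k : not_nonpos_int w -> poch w k <> 0%C.
Proof.
  intros Hw. induction k; simpl.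
  - intro H. apply (f_equal fst) in H. simpl in H. lra.
  - apply Cmult_neq_0; auto. apply nnpi_ne; auto.
Qed.

Definition rG (w : C) (n : nat) : C :=
  (RtoC (INR (S n)) * Cexp (w * RtoC (ln (INR (S n)) - ln (INR n)))
   / (w + RtoC (INR (S n))))%C.

Lemma Gamma_step w n : not_nonpos_int w -> Gamma_seq w (S n) = (Gamma_seq w n * rG w n)%C.
Proof.
  intros Hw. unfold Gamma_seq, rG, Cnpow.
  replace (w * RtoC (ln (INR (S n))))%C with
    (w * RtoC (ln (INR n)) + w * RtoC (ln (INR (S n)) - ln (INR n)))%C.
  2:{ rewrite <- Cmult_plus_distr_l, <- RtoC_plus. f_equal. f_equal. ring. }
  rewrite Cexp_add. change (Factorial.fact (S n)) with (S n * Factorial.fact n)%nat.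
  rewrite mult_INR, RtoC_mult.
  change (poch w (S (S n))) with (poch w (S n) * (w + RtoC (INR (S n))))%C.
  pose proof (poch_nz w (S n) Hw). pose proof (nnpi_ne w Hw (S n)).
  field. split; auto.
Qed.

Lemma ln_le_sub1 x : 0 < x -> ln x <= x - 1.
Proof. intros H. pose proof (exp_ineq1_le (ln x)). rewrite exp_ln in H0; auto. lra. Qed.

Lemma ln_step n : (1 <= n)%nat ->
  1 / (INR n + 1) <= ln (INR (S n)) - ln (INR n) <= 1 / INR n.
Proof.
  intros Hn. assert (Hx : 1 <= INR n) by (apply (le_INR 1); auto).
  rewrite S_INR. split.
  - pose proof (ln_le_sub1 (INR n / (INR n + 1))). rewrite ln_div in H by lra.
    assert (INR n / (INR n + 1) - 1 = - (1 / (INR n + 1))) by (field; lra).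
    assert (0 < INR n / (INR n + 1)) by (apply Rdiv_lt_0_compat; lra). lra.
  - pose proof (ln_le_sub1 ((INR n + 1) / INR n)). rewrite ln_div in H by lra.
    assert ((INR n + 1) / INR n - 1 = 1 / INR n) by (field; lra).
    assert (0 < (INR n + 1) / INR n) by (apply Rdiv_lt_0_compat; lra). lra.
Qed.

Lemma Cmod_sub_lower (w a : C) : Cmod a - Cmod w <= Cmod (w + a).
Proof.
  replace a with ((w + a) - w)%C at 1 by ring.
  pose proof (Cmod_triangle (w + a) (- w)). rewrite Cmod_opp in H. unfold Cminus. lra.
Qed.

Lemma rG_bound w n : not_nonpos_int w -> (1 <= n)%nat -> 2 * Cmod w + 1 <= INR n ->
  Cmod (rG w n - 1) <= (40 * Cmod w ^ 2 + 2 * Cmod w) / (INR n * (INR n + 1)).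
Proof.
  intros Hw Hn Hx. set (x := INR n) in *. set (c := Cmod w) in *.
  pose proof (ln_step n Hn) as Ht. set (t := ln (INR (S n)) - ln (INR n)) in *.
  fold x in Ht. assert (Hx1 : 1 <= x) by (apply (le_INR 1); auto).
  assert (Hc : 0 <= c) by apply Cmod_ge_0.
  assert (Ht0 : 0 <= t) by (assert (0 < 1/(x+1)) by (apply Rdiv_lt_0_compat; lra); lra).
  set (u := (w * RtoC t)%C).
  assert (Hu : Cmod u <= c / x).
  { unfold u. rewrite Cmod_mult, Cmod_R, Rabs_pos_eq by auto. fold c.
    replace (c / x) with (c * (1 / x)) by (field; lra). apply Rmult_le_compat_l; lra. }
  assert (Hu2 : c / x <= 1/2).
  { apply (Rmult_le_reg_r x); [lra|]. replace (c / x * x) with c by (field; lra). lra. }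
  pose proof (Cexp_bound u ltac:(lra)) as HE.
  assert (HD : (w + RtoC (INR (S n)))%C <> 0%C) by (apply nnpi_ne; auto).
  assert (Heq : (rG w n - 1)%C =
    ((RtoC (x + 1) * (Cexp u - 1 - u) + w * RtoC ((x + 1) * t - 1)) / (w + RtoC (x + 1)))%C).
  { assert (HD' : (w + RtoC (x + 1))%C <> 0%C) by (replace (x+1) with (INR (S n)) by (unfold x; rewrite S_INR; ring); auto).
    unfold rG. fold t. fold u. replace (INR (S n)) with (x + 1) by (unfold x; rewrite S_INR; ring).
    rewrite RtoC_minus, RtoC_mult. unfold u. field. auto. }
  assert (HD' : (w + RtoC (x + 1))%C <> 0%C) by (replace (x+1) with (INR (S n)) by (unfold x; rewrite S_INR; ring); auto).
  rewrite Heq, Cmod_div by auto.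
  assert (HN : Cmod (RtoC (x + 1) * (Cexp u - 1 - u) + w * RtoC ((x + 1) * t - 1))
             <= (x + 1) * (10 * (c / x) ^ 2) + c * (1 / x)).
  { eapply Rle_trans; [apply Cmod_triangle|]. rewrite !Cmod_mult, !Cmod_R. fold c.
    rewrite (Rabs_pos_eq (x+1)) by lra.
    assert (0 <= (x + 1) * t - 1 <= 1 / x).
    { split. - assert ((x+1) * (1/(x+1)) = 1) by (field; lra). nra.
      - assert ((x+1) * (1/x) = 1 + 1/x) by (field; lra). nra. }
    rewrite Rabs_pos_eq by lra.
    assert (Cmod u ^ 2 <= (c / x) ^ 2).
    { pose proof (Cmod_ge_0 u). apply pow_incr; auto. }
    apply Rplus_le_compat.
    - apply Rmult_le_compat_l; lra.
    - apply Rmult_le_compat_l; lra. }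
  assert (HDl : (x + 1) / 2 <= Cmod (w + RtoC (x + 1))).
  { pose proof (Cmod_sub_lower w (RtoC (x + 1))). rewrite Cmod_R, Rabs_pos_eq in H by lra. fold c in H. lra. }
  assert (HDp : 0 < Cmod (w + RtoC (x + 1))) by lra.
  apply (Rle_trans _ (((x + 1) * (10 * (c / x) ^ 2) + c * (1 / x)) / ((x + 1) / 2))).
  - unfold Rdiv at 1 3. apply Rmult_le_compat; auto.
    + apply Cmod_ge_0.
    + left; apply Rinv_0_lt_compat; auto.
    + apply Rinv_le_contravar; lra.
  - apply (Rmult_le_reg_r (x * (x + 1))); [nra|].
    replace ((40 * c ^ 2 + 2 * c) / (x * (x + 1)) * (x * (x + 1))) with (40 * c ^ 2 + 2 * c) by (field; lra).
    replace (((x + 1) * (10 * (c / x) ^ 2) + c * (1 / x)) / ((x + 1) / 2) * (x * (x + 1)))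
      with (20 * c^2 * ((x+1)/x) + 2 * c) by (field; lra).
    assert ((x+1)/x <= 2) by (apply (Rmult_le_reg_r x); [lra|]; replace ((x+1)/x*x) with (x+1) by (field; lra); lra).
    assert (0 <= c^2) by nra. nra.
Qed.

Lemma INR_unbounded x : exists n : nat, x <= INR n.
Proof.
  destruct (archimed x) as [H1 _]. destruct (Z.lt_ge_cases (up x) 0) as [Hz|Hz].
  - exists O. simpl. apply IZR_lt in Hz. lra.
  - exists (Z.to_nat (up x)). rewrite INR_IZR_INZ, Z2Nat.id by lia. lra.
Qed.

Lemma lim_inv_lin a : 0 < a -> is_lim_seq (fun n => / (INR n + a)) 0.
Proof.
  intros Ha. replace (Finite 0) with (Rbar_inv p_infty) by reflexivity.
  apply is_lim_seq_inv; [|discriminate].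
  apply (is_lim_seq_plus _ _ p_infty a p_infty is_lim_seq_INR (is_lim_seq_const a)). simpl. reflexivity.
Qed.

Lemma tele_series : ex_series (fun k => / ((INR k + 1) * (INR k + 2))).
Proof.
  exists 1. assert (H : forall n, sum_n (fun k => / ((INR k + 1) * (INR k + 2))) n = 1 - / (INR n + 2)).
  { induction n.
    - rewrite sum_O. simpl. field.
    - rewrite sum_Sn, IHn. change plus with Rplus. rewrite S_INR.
      pose proof (pos_INR n). match goal with |- ?a = ?b => change (@eq R a b) end. field. lra. }
  cut (is_lim_seq (sum_n (fun k => / ((INR k + 1) * (INR k + 2)))) 1); [intro HH; exact HH|].
  apply (is_lim_seq_ext (fun n => 1 - / (INR n + 2))).
  { intros; rewrite H; auto. }
  replace (Finite 1) with (Finite (1 - 0)) by (f_equal; ring). apply is_lim_seq_minus'; [apply is_lim_seq_const|].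
  apply lim_inv_lin; lra.
Qed.

Lemma rG_summable w : not_nonpos_int w -> ex_series (fun n => Cmod (rG w n - 1)).
Proof.
  intros Hw. destruct (INR_unbounded (2 * Cmod w + 1)) as [N HN].
  set (C0 := 40 * Cmod w ^ 2 + 2 * Cmod w).
  assert (HC0 : 0 <= C0) by (unfold C0; pose proof (Cmod_ge_0 w); nra).
  apply (ex_series_incr_n _ (S N)).
  apply (ex_series_le (V:=R_CompleteNormedModule) _ (fun k => C0 * / ((INR k + 1) * (INR k + 2)))).
  2:{ apply (ex_series_scal_l (V:=R_NormedModule)). apply tele_series. }
  intros k. unfold norm; simpl; unfold abs; simpl. rewrite Rabs_pos_eq by apply Cmod_ge_0.
  assert (Hn : INR (S N + k) >= INR k + 1 /\ 2 * Cmod w + 1 <= INR (S N + k)).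
  { rewrite plus_INR, S_INR. pose proof (pos_INR N). pose proof (pos_INR k). lra. }
  eapply Rle_trans; [apply rG_bound; auto; try lia; tauto|].
  fold C0. unfold Rdiv. apply Rmult_le_compat_l; auto.
  pose proof (pos_INR k). apply Rinv_le_contravar; [nra|].
  destruct Hn. change (S N + k)%nat with (S (N + k)) in *. apply Rmult_le_compat; lra.
Qed.

Lemma Gamma_conv w : not_nonpos_int w ->
  Clim (Gamma_seq w) (CGamma w) /\ exists M, forall n, Cmod (Gamma_seq w n) <= M.
Proof.
  intros Hw. destruct (prod_conv (Gamma_seq w) (rG w)) as [L [M [HL HM]]].
  - intros n; apply Gamma_step; auto.
  - apply rG_summable; auto.
  - unfold CGamma. rewrite (Clim_CLim _ _ HL). split; eauto.
Qed.

Lemma Clim_scal (u : nat -> C) L c : Clim u L -> Clim (fun n => c * u n)%C (c * L)%C.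
Proof.
  intros [H1 H2]. split; simpl.
  - apply is_lim_seq_minus'; apply is_lim_seq_mult'; auto; apply is_lim_seq_const.
  - apply is_lim_seq_plus'; apply is_lim_seq_mult'; auto; apply is_lim_seq_const.
Qed.

Lemma Clim_perturb (u v : nat -> C) L N B : Clim u L ->
  (forall n, (N <= n)%nat -> Cmod (v n - u n) <= B / (INR n + 1)) -> Clim v L.
Proof.
  intros [H1 H2] Hb.
  assert (Hz : is_lim_seq (fun n => B / (INR n + 1)) 0).
  { replace (Finite 0) with (Finite (B * 0)) by (f_equal; ring).
    apply (is_lim_seq_scal_l _ B 0). apply lim_inv_lin; lra. }
  assert (Hz' : is_lim_seq (fun n => - (B / (INR n + 1))) 0).
  { pose proof (proj1 (is_lim_seq_opp _ _) Hz) as HH. simpl in HH. rewrite Ropp_0 in HH. exact HH. }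
  split.
  - apply (is_lim_seq_ext (fun n => fst (u n) + fst (v n - u n)%C)).
    { intros n; simpl; ring. }
    replace (Finite (fst L)) with (Finite (fst L + 0)) by (f_equal; ring).
    apply is_lim_seq_plus'; auto.
    apply (is_lim_seq_le_le_loc (fun n => - (B / (INR n + 1))) _ (fun n => B / (INR n + 1))); auto.
    exists N. intros n Hn. pose proof (Cmod_fst (v n - u n)%C). pose proof (Hb n Hn).
    apply Rabs_le_inv. lra.
  - apply (is_lim_seq_ext (fun n => snd (u n) + snd (v n - u n)%C)).
    { intros n; simpl; ring. }
    replace (Finite (snd L)) with (Finite (snd L + 0)) by (f_equal; ring).
    apply is_lim_seq_plus'; auto.
    apply (is_lim_seq_le_le_loc (fun n => - (B / (INR n + 1))) _ (fun n => B / (INR n + 1))); auto.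
    exists N. intros n Hn. pose proof (Cmod_snd (v n - u n)%C). pose proof (Hb n Hn).
    apply Rabs_le_inv. lra.
Qed.

Lemma poch_shift w k : poch w (S k) = (w * poch (w + 1) k)%C.
Proof.
  induction k.
  - simpl. apply injective_projections; simpl; ring.
  - change (poch w (S (S k))) with (poch w (S k) * (w + RtoC (INR (S k))))%C.
    rewrite IHk. simpl poch. rewrite S_INR, RtoC_plus. ring.
Qed.

Lemma Cexp_R y : Cexp (RtoC y) = RtoC (exp y).
Proof. unfold Cexp; simpl. rewrite cos_0, sin_0. apply injective_projections; simpl; ring. Qed.

Lemma Gamma_seq_S w n : not_nonpos_int w -> (1 <= n)%nat ->
  Gamma_seq (w + 1) n = (Gamma_seq w n * (w * RtoC (INR n) / (w + 1 + RtoC (INR n))))%C.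
Proof.
  intros Hw Hn. assert (Hn' : 0 < INR n) by (apply lt_0_INR; lia).
  assert (Hw0 : w <> 0%C) by (pose proof (nnpi_ne w Hw 0); simpl in H; rewrite Cplus_0_r in H; auto).
  pose proof (poch_nz (w + 1) n (nnpi_1 w Hw)) as Hp.
  pose proof (nnpi_ne (w + 1) (nnpi_1 w Hw) n) as Hd.
  unfold Gamma_seq, Cnpow.
  change (poch (w + 1) (S n)) with (poch (w + 1) n * (w + 1 + RtoC (INR n)))%C.
  rewrite (poch_shift w n).
  replace ((w + 1) * RtoC (ln (INR n)))%C with (w * RtoC (ln (INR n)) + RtoC (ln (INR n)))%C by ring.
  rewrite Cexp_add, Cexp_R, exp_ln by auto.
  field. auto.
Qed.

Lemma Gamma_S w : not_nonpos_int w -> CGamma (w + 1) = (w * CGamma w)%C.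
Proof.
  intros Hw. destruct (Gamma_conv w Hw) as [HL [M HM]].
  assert (HM0 : 0 <= M) by (pose proof (HM O); pose proof (Cmod_ge_0 (Gamma_seq w 0)); lra).
  destruct (INR_unbounded (2 * Cmod (w + 1) + 1)) as [N HN].
  set (B := 4 * M * Cmod w * Cmod (w + 1)).
  assert (Hc : Clim (Gamma_seq (w + 1)) (w * CGamma w)%C).
  { apply (Clim_perturb (fun n => w * Gamma_seq w n)%C _ _ N B); [apply Clim_scal; auto|].
    intros n Hn. assert (Hn1 : (1 <= n)%nat).
    { destruct n; [|lia]. assert (N = O) by lia. subst N. simpl in HN. pose proof (Cmod_ge_0 (w+1)). exfalso. lra. }
    assert (HnN : INR N <= INR n) by (apply le_INR; auto).
    pose proof (nnpi_ne (w + 1) (nnpi_1 w Hw) n) as Hd.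
    rewrite (Gamma_seq_S w n Hw Hn1).
    replace (Gamma_seq w n * (w * RtoC (INR n) / (w + 1 + RtoC (INR n))) - w * Gamma_seq w n)%C
      with (- (Gamma_seq w n * w * (w + 1) / (w + 1 + RtoC (INR n))))%C by (field; auto).
    rewrite Cmod_opp, Cmod_div by auto. rewrite !Cmod_mult.
    pose proof (Cmod_sub_lower (w + 1) (RtoC (INR n))) as Hl. rewrite Cmod_R, Rabs_pos_eq in Hl by apply pos_INR.
    assert (Hden : (INR n + 1) / 4 <= Cmod (w + 1 + RtoC (INR n))).
    { assert (1 <= INR n) by (apply (le_INR 1); auto). lra. }
    assert (Hdp : 0 < (INR n + 1) / 4) by (pose proof (pos_INR n); lra).
    unfold B. apply (Rle_trans _ (M * Cmod w * Cmod (w + 1) / ((INR n + 1) / 4))).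
    + unfold Rdiv. apply Rmult_le_compat.
      * pose proof (Cmod_ge_0 (Gamma_seq w n)); pose proof (Cmod_ge_0 w); pose proof (Cmod_ge_0 (w+1)).
        apply Rmult_le_pos; [apply Rmult_le_pos|]; auto.
      * left. apply Rinv_0_lt_compat. lra.
      * pose proof (Cmod_ge_0 w); pose proof (Cmod_ge_0 (w+1)).
        apply Rmult_le_compat_r; auto. apply Rmult_le_compat_r; auto.
      * apply Rinv_le_contravar; auto.
    + right. field. pose proof (pos_INR n). lra. }
  unfold CGamma at 1. apply Clim_CLim; auto.
Qed.

Lemma Gamma_shift w k : not_nonpos_int w -> CGamma (w + RtoC (INR k)) = (poch w k * CGamma w)%C.
Proof.
  intros Hw. induction k.
  - simpl. replace (w + RtoC 0)%C with w by (apply injective_projections; simpl; ring). ring.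
  - replace (w + RtoC (INR (S k)))%C with ((w + RtoC (INR k)) + 1)%C
      by (rewrite S_INR, RtoC_plus; ring).
    rewrite Gamma_S by (apply nnpi_shift; auto). rewrite IHk. simpl. ring.
Qed.

Lemma Rseries_tail (b : nat -> R) M q : 0 <= M -> 0 <= q <= 1/2 ->
  (forall n, Rabs (b (S n)) <= M * q ^ (S n)) ->
  ex_series b /\ Rabs (Series b - b O) <= 2 * M * q.
Proof.
  intros HM Hq Hb.
  assert (Hg : ex_series (fun n => (M * q) * q ^ n)).
  { apply (ex_series_scal_l (V:=R_NormedModule)). apply ex_series_geom. rewrite Rabs_pos_eq; lra. }
  assert (Hle : forall n, Rabs (b (S n)) <= (M * q) * q ^ n).
  { intros n. rewrite Rmult_assoc. apply (Hb n). }
  assert (Ht : ex_series (fun n => Rabs (b (S n)))).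
  { apply (ex_series_le (V:=R_CompleteNormedModule) _ (fun n => (M * q) * q ^ n)); [|exact Hg].
    intros n. unfold norm; simpl; unfold abs; simpl. rewrite Rabs_Rabsolu. auto. }
  assert (Hs : ex_series (fun n => b (S n))) by (apply ex_series_Rabs; auto).
  assert (Hb' : ex_series b) by (apply (proj2 (ex_series_incr_1 b)); auto).
  split; auto.
  rewrite (Series_incr_1 b Hb'). replace (b 0%nat + Series (fun k => b (S k)) - b 0%nat)
    with (Series (fun k => b (S k))) by ring.
  eapply Rle_trans; [apply Series_Rabs; auto|].
  eapply Rle_trans; [apply (Series_le _ (fun n => (M * q) * q ^ n)); auto|].
  { intros n; split; [apply Rabs_pos|auto]. }
  rewrite Series_scal_l, Series_geom by (rewrite Rabs_pos_eq; lra).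
  apply (Rmult_le_reg_r (1 - q)); [lra|].
  replace (M * q * / (1 - q) * (1 - q)) with (M * q) by (field; lra).
  assert (0 <= M * q) by nra. nra.
Qed.

Lemma Cseries_tail (a : nat -> C) M q : 0 <= M -> 0 <= q <= 1/2 ->
  (forall n, Cmod (a (S n)) <= M * q ^ (S n)) ->
  ex_series a /\ forall c, Cmod (CSeries a - c) <= 2 * Cmod (a O - c) + 4 * M * q.
Proof.
  intros HM Hq Ha.
  destruct (Rseries_tail (fun n => fst (a n)) M q HM Hq) as [E1 B1].
  { intros n. eapply Rle_trans; [apply Cmod_fst|auto]. }
  destruct (Rseries_tail (fun n => snd (a n)) M q HM Hq) as [E2 B2].
  { intros n. eapply Rle_trans; [apply Cmod_snd|auto]. }
  split.
  - apply (proj2 (ex_series_incr_1 a)).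
    apply (ex_series_le (V:=C_CompleteNormedModule) _ (fun n => (M * q) * q ^ n)).
    + intros n. change (Cmod (a (S n)) <= M * q * q ^ n). rewrite Rmult_assoc. apply (Ha n).
    + apply (ex_series_scal_l (V:=R_NormedModule)). apply ex_series_geom. rewrite Rabs_pos_eq; lra.
  - intros c. eapply Rle_trans; [apply Cmod_le_sum|]. unfold CSeries. simpl.
    pose proof (Cmod_fst (a O - c)%C). pose proof (Cmod_snd (a O - c)%C). simpl in *.
    assert (Rabs (Series (fun n => fst (a n)) + - fst c) <=
            Rabs (Series (fun n => fst (a n)) - fst (a O)) + Rabs (fst (a O) + - fst c)).
    { replace (Series (fun n => fst (a n)) + - fst c) with
        ((Series (fun n => fst (a n)) - fst (a O)) + (fst (a O) + - fst c)) by ring.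
      apply Rabs_triang. }
    assert (Rabs (Series (fun n => snd (a n)) + - snd c) <=
            Rabs (Series (fun n => snd (a n)) - snd (a O)) + Rabs (snd (a O) + - snd c)).
    { replace (Series (fun n => snd (a n)) + - snd c) with
        ((Series (fun n => snd (a n)) - snd (a O)) + (snd (a O) + - snd c)) by ring.
      apply Rabs_triang. }
    lra.
Qed.

Lemma dist_pos w : not_nonpos_int w -> exists d, 0 < d /\ forall m, d <= Cmod (w + RtoC (INR m)).
Proof.
  intros Hw. destruct (INR_unbounded (Cmod w + 1)) as [N HN].
  assert (Hfin : forall K, exists d, 0 < d /\ forall m, (m < K)%nat -> d <= Cmod (w + RtoC (INR m))).
  { induction K.
    - exists 1. split; [lra|]. intros; lia.
    - destruct IHK as [d [Hd Hm]]. exists (Rmin d (Cmod (w + RtoC (INR K)))). split.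
      + apply Rmin_pos; auto. apply Cmod_gt_0. apply nnpi_ne; auto.
      + intros m Hm'. destruct (Nat.eq_dec m K) as [->|Hne]; [apply Rmin_r|].
        eapply Rle_trans; [apply Rmin_l|]. apply Hm. lia. }
  destruct (Hfin N) as [d [Hd Hm]]. exists (Rmin d 1). split; [apply Rmin_pos; lra|].
  intros m. destruct (Nat.lt_ge_cases m N) as [Hlt|Hge].
  - eapply Rle_trans; [apply Rmin_l|]. auto.
  - eapply Rle_trans; [apply Rmin_r|]. pose proof (Cmod_sub_lower w (RtoC (INR m))).
    rewrite Cmod_R, Rabs_pos_eq in H by apply pos_INR. apply le_INR in Hge. lra.
Qed.

Lemma ratio_bound a b : not_nonpos_int b -> exists B, 1 <= B /\
  forall m, Cmod (a + RtoC (INR m)) <= B * Cmod (b + RtoC (INR m)).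
Proof.
  intros Hb. destruct (dist_pos b Hb) as [d [Hd Hm]].
  exists (1 + Cmod (a - b) / d). split.
  - pose proof (Cmod_ge_0 (a - b)). assert (0 <= Cmod (a - b) / d) by (apply Rdiv_le_0_compat; lra). lra.
  - intros m. replace (a + RtoC (INR m))%C with ((b + RtoC (INR m)) + (a - b))%C by ring.
    eapply Rle_trans; [apply Cmod_triangle|]. pose proof (Hm m). pose proof (Cmod_ge_0 (a - b)).
    assert (Cmod (a - b) <= Cmod (a - b) / d * Cmod (b + RtoC (INR m))).
    { apply (Rmult_le_reg_r d); auto.
      replace (Cmod (a - b) / d * Cmod (b + RtoC (INR m)) * d) with (Cmod (a - b) * Cmod (b + RtoC (INR m))) by (field; lra).
      apply Rmult_le_compat_l; auto. }
    lra.
Qed.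

Lemma poch_ratio a b B : 0 <= B -> (forall m, Cmod (a + RtoC (INR m)) <= B * Cmod (b + RtoC (INR m))) ->
  forall k, Cmod (poch a k) <= B ^ k * Cmod (poch b k).
Proof.
  intros HB Hm k. induction k; simpl.
  - lra.
  - rewrite !Cmod_mult. pose proof (Cmod_ge_0 (poch a k)). pose proof (Cmod_ge_0 (a + RtoC (INR k))).
    replace (B * B ^ k * (Cmod (poch b k) * Cmod (b + RtoC (INR k))))
      with ((B ^ k * Cmod (poch b k)) * (B * Cmod (b + RtoC (INR k)))) by ring.
    apply Rmult_le_compat; auto.
Qed.

Lemma Cinv_0 : (/ 0 = 0)%C.
Proof. unfold Cinv; simpl. unfold Rdiv. rewrite !Rmult_0_l, Ropp_0, Rmult_0_l. reflexivity. Qed.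

Lemma fact_ge1 k : 1 <= INR (fact k).
Proof. apply (le_INR 1). pose proof (lt_O_fact k). lia. Qed.

Definition hterm (as_ bs : list C) (x : C) (k : nat) : C :=
  (Cprod (map (fun a => poch a k) as_) / Cprod (map (fun b => poch b k) bs)
    * x ^ k / RtoC (INR (fact k)))%C.

Lemma hypergeo_eq as_ bs x : hypergeo as_ bs x = CSeries (hterm as_ bs x).
Proof. reflexivity. Qed.

Lemma hterm0 as_ bs x : hterm as_ bs x 0 = 1%C.
Proof.
  assert (forall l : list C, Cprod (map (fun a => poch a 0) l) = 1%C).
  { induction l; simpl in *; [auto|]. rewrite IHl. ring. }
  unfold hterm. rewrite !H. simpl. field; intro H1; apply (f_equal fst) in H1; simpl in H1; lra.
Qed.

Lemma hterm_bound al be de (nu : nat) x B1 B2 :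
  not_nonpos_int be -> not_nonpos_int de -> 0 <= B1 -> 0 <= B2 ->
  (forall m, Cmod (al + 1 + RtoC (INR m))%C <= B1 * Cmod (de + RtoC (INR m))%C) ->
  (forall m, Cmod (be + RtoC (INR m))%C <= B2 * Cmod (be + 1 + RtoC (INR m))%C) ->
  forall k, Cmod (hterm [(al + 1)%C; (be + RtoC (INR nu))%C] [de; (be + 1 + RtoC (INR nu))%C] x k)
            <= (B1 * B2 * Cmod x) ^ k.
Proof.
  intros Hbe Hde HB1 HB2 H1 H2 k.
  assert (H2' : forall m, Cmod (be + RtoC (INR nu) + RtoC (INR m))%C <= B2 * Cmod (be + 1 + RtoC (INR nu) + RtoC (INR m))%C).
  { intros m. pose proof (H2 (nu + m)%nat). rewrite plus_INR, RtoC_plus in H.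
    replace (be + RtoC (INR nu) + RtoC (INR m))%C with (be + (RtoC (INR nu) + RtoC (INR m)))%C by ring.
    replace (be + 1 + RtoC (INR nu) + RtoC (INR m))%C with (be + 1 + (RtoC (INR nu) + RtoC (INR m)))%C by ring.
    auto. }
  pose proof (poch_ratio _ _ _ HB1 H1 k) as P1.
  pose proof (poch_ratio _ _ _ HB2 H2' k) as P2.
  pose proof (poch_nz de k Hde) as N1.
  pose proof (poch_nz (be + 1 + RtoC (INR nu)) k (nnpi_shift _ nu (nnpi_1 _ Hbe))) as N2.
  assert (NF : RtoC (INR (fact k)) <> 0%C).
  { intro H. apply (f_equal fst) in H. simpl in H. pose proof (fact_ge1 k). lra. }
  unfold hterm, Cprod. simpl map. simpl fold_right.
  rewrite Cmod_div by auto. rewrite !Cmod_mult, Cmod_div.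
  2:{ apply Cmult_neq_0; auto. rewrite Cmult_1_r; auto. }
  rewrite !Cmod_mult, Cmod_pow, !Cmod_R, Rabs_R1, (Rabs_pos_eq (INR (fact k))) by (pose proof (fact_ge1 k); lra).
  rewrite !Rmult_1_r.
  pose proof (proj1 (Cmod_gt_0 _) N1). pose proof (proj1 (Cmod_gt_0 _) N2). pose proof (fact_ge1 k).
  set (p1 := Cmod (poch (al + 1) k)) in *. set (p2 := Cmod (poch (be + RtoC (INR nu)) k)) in *.
  set (q1 := Cmod (poch de k)) in *. set (q2 := Cmod (poch (be + 1 + RtoC (INR nu)) k)) in *.
  set (X := Cmod x ^ k). assert (0 <= X) by (apply pow_le; apply Cmod_ge_0).
  assert (0 <= p1) by apply Cmod_ge_0. assert (0 <= p2) by apply Cmod_ge_0.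
  assert (Hr : p1 * p2 / (q1 * q2) <= B1 ^ k * B2 ^ k).
  { apply (Rmult_le_reg_r (q1 * q2)); [nra|].
    replace (p1 * p2 / (q1 * q2) * (q1 * q2)) with (p1 * p2) by (field; lra).
    replace (B1 ^ k * B2 ^ k * (q1 * q2)) with ((B1 ^ k * q1) * (B2 ^ k * q2)) by ring.
    apply Rmult_le_compat; auto. }
  rewrite !Rpow_mult_distr. fold X.
  assert (0 <= p1 * p2 / (q1 * q2)) by (apply Rdiv_le_0_compat; nra).
  apply (Rle_trans _ (p1 * p2 / (q1 * q2) * X)).
  - set (Y := p1 * p2 / (q1 * q2) * X). assert (0 <= Y) by (unfold Y; nra).
    apply (Rmult_le_reg_r (INR (fact k))); [lra|].
    replace (Y / INR (fact k) * INR (fact k)) with Y by (field; lra). nra.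
  - apply Rmult_le_compat_r; auto.
Qed.

Lemma Csub0 (x : C) : (x - 0 = x)%C.
Proof. ring. Qed.

Definition Cone : C := RtoC 1.
Definition Czero : C := RtoC 0.

Ltac zsimp := unfold Cdiv; repeat progress rewrite ?Cmult_0_r, ?Cmult_0_l, ?Cinv_0.

Lemma f_term_eq (al be ga de z : C) (nu : nat) :
  not_nonpos_int (al + ga)%C -> not_nonpos_int be -> z <> 0%C ->
  f_term al be ga de z nu =
  ((/ z) ^ nu * poch (al + ga) nu / (RtoC (INR (fact nu)) * poch (be + 1) nu)
   * (CGamma (al + 1) * CGamma (al + ga) / (CGamma (be + 1) * CGamma de))
   * hypergeo [(al + 1)%C; (be + RtoC (INR nu))%C] [de; (be + 1 + RtoC (INR nu))%C] (- / z))%C.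
Proof.
  intros Hag Hbe Hz. unfold f_term, MacRobertE, Cprod. simpl map. simpl fold_right.
  rewrite (Gamma_shift (al + ga) nu Hag), (Gamma_shift be nu Hbe),
    (Gamma_shift (be + 1) nu (nnpi_1 be Hbe)), (Gamma_S be Hbe).
  set (H := hypergeo _ _ _).
  assert (NF : RtoC (INR (fact nu)) <> 0%C).
  { intro E. apply (f_equal fst) in E. simpl in E. pose proof (fact_ge1 nu). lra. }
  pose proof (poch_nz be nu Hbe) as Pb. pose proof (poch_nz (be + 1) nu (nnpi_1 be Hbe)) as Pb1.
  assert (Hb0 : be <> 0%C) by (pose proof (nnpi_ne be Hbe 0); simpl in H0; rewrite Cplus_0_r in H0; auto).
  destruct (Ceq_dec (CGamma be) 0) as [G0|G0]; [rewrite G0; zsimp; reflexivity|].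
  destruct (Ceq_dec (CGamma de) 0) as [D0|D0]; [rewrite D0; zsimp; reflexivity|].
  field. repeat split; auto.
Qed.

Theorem mainTheorem4 (al be ga de : C)
  (Hal : not_nonpos_int (al + 1)%C)
  (Halga : not_nonpos_int (al + ga)%C)
  (Hbe : not_nonpos_int be)
  (Hde : not_nonpos_int de) :
  exists (K R0 : R), (0 < R0)%R /\
    forall z : C, (R0 < Cmod z)%R ->
      ex_series (f_term al be ga de z) /\
      (Cmod (f_fun al be ga de z
              - CGamma (al + 1) * CGamma (al + ga)
                / (CGamma (be + 1) * CGamma de)) <= K / Cmod z)%R.
Proof.
  pose proof (nnpi_1 be Hbe) as Hbe1.
  destruct (ratio_bound (al + 1) de Hde) as [B1 [HB1 R1]].
  destruct (ratio_bound be (be + 1) Hbe1) as [B2 [HB2 R2]].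
  destruct (ratio_bound (al + ga) (be + 1) Hbe1) as [B3 [HB3 R3]].
  set (Lead := (CGamma (al + 1) * CGamma (al + ga) / (CGamma (be + 1) * CGamma de))%C).
  set (L := Cmod Lead). assert (HL : 0 <= L) by apply Cmod_ge_0.
  exists (8 * L * (B1 * B2) + 16 * L * B3), (2 * (B1 * B2 + B3) + 1).
  assert (HB12 : 1 <= B1 * B2) by nra.
  split; [nra|]. intros z Hzr.
  assert (Hzp : 0 < Cmod z) by nra.
  assert (Hz : z <> 0%C) by (intro E; rewrite E, Cmod_0 in Hzp; lra).
  set (q := B1 * B2 / Cmod z). set (q' := B3 / Cmod z).
  assert (Hq : 0 <= q <= 1/2).
  { unfold q; split; [apply Rdiv_le_0_compat; lra|].
    apply (Rmult_le_reg_r (Cmod z)); auto. replace (B1 * B2 / Cmod z * Cmod z) with (B1 * B2) by (field; lra). lra. }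
  assert (Hq' : 0 <= q' <= 1/2).
  { unfold q'; split; [apply Rdiv_le_0_compat; lra|].
    apply (Rmult_le_reg_r (Cmod z)); auto. replace (B3 / Cmod z * Cmod z) with B3 by (field; lra). lra. }
  assert (Hx : Cmod (- / z)%C = / Cmod z) by (rewrite Cmod_opp, Cmod_inv; auto).
  assert (Hh : forall nu k, Cmod (hterm [(al + 1)%C; (be + RtoC (INR nu))%C] [de; (be + 1 + RtoC (INR nu))%C] (- / z) k) <= q ^ k).
  { intros nu k. eapply Rle_trans; [apply hterm_bound; auto; try lra|]. rewrite Hx. unfold q. right. reflexivity. }
  assert (HS : forall nu, ex_series (hterm [(al + 1)%C; (be + RtoC (INR nu))%C] [de; (be + 1 + RtoC (INR nu))%C] (- / z)) /\
    forall c, Cmod (hypergeo [(al + 1)%C; (be + RtoC (INR nu))%C] [de; (be + 1 + RtoC (INR nu))%C] (- / z) - c)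
       <= 2 * Cmod (1 - c) + 4 * 1 * q).
  { intros nu. destruct (Cseries_tail (hterm [(al + 1)%C; (be + RtoC (INR nu))%C] [de; (be + 1 + RtoC (INR nu))%C] (- / z)) 1 q)
      as [E B]; [lra|auto| |].
    - intros n. rewrite Rmult_1_l. apply Hh.
    - split; auto. intros c. rewrite hypergeo_eq. specialize (B c). rewrite hterm0 in B. exact B. }
  assert (HHb : forall nu, Cmod (hypergeo [(al + 1)%C; (be + RtoC (INR nu))%C] [de; (be + 1 + RtoC (INR nu))%C] (- / z)) <= 4).
  { intros nu. destruct (HS nu) as [_ B]. pose proof (B 0%C) as B0.
    rewrite !Csub0 in B0. rewrite Cmod_1 in B0. lra. }
  assert (Hc : forall nu, Cmod ((/ z) ^ nu * poch (al + ga) nu / (RtoC (INR (fact nu)) * poch (be + 1) nu))%C <= q' ^ nu).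
  { intros nu. pose proof (poch_nz (be + 1) nu Hbe1) as Pn.
    assert (NF : RtoC (INR (fact nu)) <> 0%C).
    { intro E. apply (f_equal fst) in E. simpl in E. pose proof (fact_ge1 nu). lra. }
    rewrite Cmod_div by (apply Cmult_neq_0; auto). rewrite !Cmod_mult, Cmod_pow, Cmod_inv, Cmod_R by auto.
    rewrite Rabs_pos_eq by (pose proof (fact_ge1 nu); lra).
    pose proof (poch_ratio _ _ _ (ltac:(lra) : 0 <= B3) R3 nu) as P.
    pose proof (proj1 (Cmod_gt_0 _) Pn) as Pp. pose proof (fact_ge1 nu).
    unfold q', Rdiv at 2. rewrite Rpow_mult_distr.
    set (Z := (/ Cmod z) ^ nu). assert (HZ : 0 <= Z) by (apply pow_le; left; apply Rinv_0_lt_compat; auto).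
    set (F := INR (fact nu)) in *. set (pa := Cmod (poch (al + ga) nu)) in *.
    set (pb := Cmod (poch (be + 1) nu)) in *. set (b3 := B3 ^ nu) in *.
    assert (0 <= b3) by (apply pow_le; lra).
    apply (Rmult_le_reg_r (F * pb)); [nra|].
    replace (Z * pa / (F * pb) * (F * pb)) with (Z * pa) by (field; lra).
    assert (pa <= b3 * pb * F) by (assert (0 <= b3 * pb) by nra; nra).
    replace (b3 * Z * (F * pb)) with (Z * (b3 * pb * F)) by ring.
    apply Rmult_le_compat_l; auto. }
  destruct (Cseries_tail (f_term al be ga de z) (4 * L) q') as [Ef Bf]; [lra|auto| |].
  { intros n. rewrite (f_term_eq al be ga de z (S n) Halga Hbe Hz). fold Lead.
    rewrite !Cmod_mult. fold L. pose proof (Hc (S n)). pose proof (HHb (S n)).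
    pose proof (Cmod_ge_0 (hypergeo [(al + 1)%C; (be + RtoC (INR (S n)))%C] [de; (be + 1 + RtoC (INR (S n)))%C] (- / z))).
    pose proof (Cmod_ge_0 ((/ z) ^ S n * poch (al + ga) (S n) / (RtoC (INR (fact (S n))) * poch (be + 1) (S n)))%C).
    set (A := Cmod ((/ z) ^ S n * poch (al + ga) (S n) / (RtoC (INR (fact (S n))) * poch (be + 1) (S n)))%C) in *.
    set (Hm := Cmod (hypergeo [(al + 1)%C; (be + RtoC (INR (S n)))%C] [de; (be + 1 + RtoC (INR (S n)))%C] (- / z))) in *.
    replace (4 * L * q' ^ S n) with ((q' ^ S n * L) * 4) by ring.
    apply Rmult_le_compat; try nra. }
  split; auto.
  unfold f_fun. fold Lead. eapply Rle_trans; [apply Bf|].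
  rewrite (f_term_eq al be ga de z 0 Halga Hbe Hz). fold Lead.
  assert (E0 : ((/ z) ^ 0 * poch (al + ga) 0 / (RtoC (INR (fact 0)) * poch (be + 1) 0))%C = Cone).
  { unfold Cone. simpl poch. simpl Cpow. simpl fact. simpl INR. field; intro E; apply (f_equal fst) in E; simpl in E; lra. }
  rewrite E0.
  replace (Cone * Lead * hypergeo [(al + 1)%C; (be + RtoC (INR 0))%C] [de; (be + 1 + RtoC (INR 0))%C] (- / z) - Lead)%C
    with (Lead * (hypergeo [(al + 1)%C; (be + RtoC (INR 0))%C] [de; (be + 1 + RtoC (INR 0))%C] (- / z) - Cone))%C by (unfold Cone; ring).
  rewrite Cmod_mult. fold L. destruct (HS 0%nat) as [_ B]. pose proof (B Cone) as B1'.
  change (Cmod (1 - Cone)%C) with (Cmod (Cone - Cone)%C) in B1'. assert (E1' : (Cone - Cone)%C = Czero) by (unfold Cone, Czero; ring). rewrite E1' in B1'. unfold Czero in B1'. rewrite Cmod_R, Rabs_R0 in B1'.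
  assert (L * Cmod (hypergeo [(al + 1)%C; (be + RtoC (INR 0))%C] [de; (be + 1 + RtoC (INR 0))%C] (- / z) - Cone) <= L * (4 * q))
    by (apply Rmult_le_compat_l; lra).
  unfold q, q' in *. apply (Rmult_le_reg_r (Cmod z)); auto.
  replace ((8 * L * (B1 * B2) + 16 * L * B3) / Cmod z * Cmod z) with (8 * L * (B1 * B2) + 16 * L * B3) by (field; lra).
  assert (E1 : L * (4 * (B1 * B2 / Cmod z)) * Cmod z = 4 * L * (B1 * B2)) by (field; lra).
  assert (E2 : 4 * L * (B3 / Cmod z) * Cmod z = 4 * L * B3) by (field; lra).
  nra.
Qed.
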